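(* Let $\Phi:\mathbb R\to\mathbb R$ and $\hbar:[0,1]\to\mathbb R$ be differentiable functions such that $\Phi$ is strictly monotone, and for every $0\le c\le1$ the function $\hbar_c(x)=\hbar(x)+\hbar(c-x)$ is strictly monotone on $[0,c/2]$ and $\Phi(\hbar_c)$ is strictly increasing on $[0,c/2]$. Let $m,n\ge2$ and let $\mathbf p\in\mathbb R^m$, $\mathbf q\in\mathbb R^n$ be probability vectors with all entries strictly positive. Then the $(\Phi,\hbar)$-entropy $H(P)=\Phi\big(\sum_{i=1}^m\sum_{j=1}^n\hbar(p_{i,j})\big)$ is strict Schur-concave on $\mathcal C(\mathbf p,\mathbf q)$.
   Context: $\mathcal C(\mathbf p,\mathbf q)$: nonnegative $m\times n$ matrices $P=(p_{i,j})$ with row sums $p_i$, column sums $q_j$, viewed as vectors in $\mathbb R^{mn}$. Majorization: for $x,y\in\mathbb R^N$ with decreasing rearrangements $\bar x,\bar y$ and $F_{\bar x}(i)=\sum_{k\le i}\bar x_k$, $x\preceq y$ if $F_{\bar x}(i)\le F_{\bar y}(i)$ for $1\le i<N$ and $F_{\bar x}(N)=F_{\bar y}(N)$; $x\prec y$ if moreover strict inequality holds for some $i<N$. A symmetric function $\Psi$ is strict Schur-concave if $x\preceq y$ implies $\Psi(x)\ge\Psi(y)$ and $x\prec y$ implies $\Psi(x)>\Psi(y)$. *)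

(* Defs.v *)
From HB Require Import structures.
From mathcomp Require Import all_boot all_order all_algebra.
From mathcomp Require Import all_classical all_reals all_analysis.
Set Implicit Arguments. Unset Strict Implicit. Unset Printing Implicit Defensive.
Import Order.TTheory GRing.Theory Num.Theory.
Import numFieldNormedType.Exports.
Local Open Scope classical_set_scope.
Local Open Scope ring_scope.

Section Defs.
Variable R : realType.

Definition decr_rearr (N : nat) (x : 'rV[R]_N) : seq R :=
  sort (fun a b : R => b <= a) [seq x 0 i | i <- enum 'I_N].

(* F_{xbar}(i) = sum_{k <= i} xbar_k  (1-indexed) *)
Definition Fpart (N : nat) (x : 'rV[R]_N) (i : nat) : R :=
  \sum_(k < i) nth 0 (decr_rearr x) k.

Definition majorized (N : nat) (x y : 'rV[R]_N) : Prop :=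
  (forall i : nat, (1 <= i < N)%N -> Fpart x i <= Fpart y i)
  /\ Fpart x N = Fpart y N.

Definition strictly_majorized (N : nat) (x y : 'rV[R]_N) : Prop :=
  majorized x y /\ exists i : nat, (1 <= i < N)%N /\ Fpart x i < Fpart y i.

Definition pos_prob_vec (k : nat) (p : 'I_k -> R) : Prop :=
  (forall i, 0 < p i) /\ \sum_(i < k) p i = 1.

Definition coupling (m n : nat) (p : 'I_m -> R) (q : 'I_n -> R) : set 'M[R]_(m, n) :=
  [set P | (forall i j, 0 <= P i j)
           /\ (forall i, \sum_(j < n) P i j = p i)
           /\ (forall j, \sum_(i < m) P i j = q j)].

Definition strict_schur_concave_on (m n : nat) (S : set 'M[R]_(m, n))
    (Psi : 'M[R]_(m, n) -> R) : Prop :=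
  forall P Q, S P -> S Q ->
    (majorized (mxvec P) (mxvec Q) -> Psi Q <= Psi P) /\
    (strictly_majorized (mxvec P) (mxvec Q) -> Psi Q < Psi P).

Definition strictly_increasing_on (A : set R) (f : R -> R) : Prop :=
  forall x y, A x -> A y -> x < y -> f x < f y.

Definition strictly_decreasing_on (A : set R) (f : R -> R) : Prop :=
  forall x y, A x -> A y -> x < y -> f y < f x.

Definition strictly_monotone_on (A : set R) (f : R -> R) : Prop :=
  strictly_increasing_on A f \/ strictly_decreasing_on A f.

(* differentiability of f at x relative to the set A (one-sided at endpoints
   of an interval): the difference quotient has a finite limit as t -> 0
   with t <> 0 and x + t in A *)
Definition derivable_within (A : set R) (f : R -> R) (x : R) : Prop :=
  exists l : R,
    (fun t : R => (f (x + t) - f x) / t) @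
      (within (fun t : R => t != 0 /\ A (x + t)) (nbhs (0 : R))) --> l.

Definition differentiable_on (A : set R) (f : R -> R) : Prop :=
  forall x, A x -> derivable_within A f x.

Definition phi_h_entropy (m n : nat) (Phi h : R -> R) (P : 'M[R]_(m, n)) : R :=
  Phi (\sum_(i < m) \sum_(j < n) h (P i j)).

End Defs.

(* Main.v *)
Require Import Defs.
From HB Require Import structures.
From mathcomp Require Import all_boot all_order all_algebra.
From mathcomp Require Import all_classical all_reals all_analysis.
From mathcomp Require Import ring lra zify.
Import Order.TTheory GRing.Theory Num.Theory.
Import numFieldNormedType.Exports.
Local Open Scope classical_set_scope.
Local Open Scope ring_scope.

Section Core.
Variable R : realDomainType.

Lemma sum_upd2 (f g : nat -> R) i j k : j != k ->
  (forall l, l != j -> l != k -> f l = g l) ->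
  \sum_(l < i) f l = \sum_(l < i) g l + (j < i)%:R * (f j - g j) + (k < i)%:R * (f k - g k).
Proof.
move=> njk fg; elim: i => [|i IH]; first by rewrite !big_ord0 !mul0r !addr0.
rewrite !big_ord_recr /= IH !ltnS.
have [<-|nij] := eqVneq j i.
  rewrite leqnn ltnn.
  have [kj|jk] := ltnP k j.
    by rewrite (ltnW kj) /= !mul1r mul0r; lra.
  rewrite ltn_geF; last by rewrite ltn_neqAle njk jk.
  by rewrite /= mul0r mul1r; lra.
have [<-|nik] := eqVneq k i.
  rewrite leqnn ltnn.
  have [jk|kj] := ltnP j k.
    by rewrite (ltnW jk) /= !mul1r mul0r; lra.
  rewrite ltn_geF; last by rewrite ltn_neqAle eq_sym njk kj.
  by rewrite /= mul0r mul1r; lra.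
rewrite [(j <= i)%N]leq_eqVlt [(k <= i)%N]leq_eqVlt (negbTE nij) (negbTE nik) /=.
by rewrite (fg i) 1?eq_sym //; lra.
Qed.

Lemma sum_lt1 (f g : nat -> R) N j : (forall l, (l < N)%N -> f l <= g l) ->
  (j < N)%N -> f j < g j -> \sum_(l < N) f l < \sum_(l < N) g l.
Proof.
move=> fg jN fgj.
rewrite (bigD1 (Ordinal jN)) //= [X in _ < X](bigD1 (Ordinal jN)) //=.
by apply: ltr_leD => //; apply: ler_sum => l _; apply: fg.
Qed.

Lemma sumn_lt1 (f g : nat -> nat) N j : (forall l, (l < N)%N -> (f l <= g l)%N) ->
  (j < N)%N -> (f j < g j)%N -> (\sum_(l < N) f l < \sum_(l < N) g l)%N.
Proof.
move=> fg jN fgj.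
rewrite (bigD1 (Ordinal jN)) //= [X in (_ < X)%N](bigD1 (Ordinal jN)) //=.
have : (\sum_(i < N | i != Ordinal jN) f i <= \sum_(i < N | i != Ordinal jN) g i)%N.
  by apply: leq_sum => l _; apply: fg.
move=> H; rewrite -addSn; exact: leq_add.
Qed.

Section CoreS.
Variable G : R -> R.
Hypothesis HG : forall a b d, 0 <= a -> 0 < d -> a + d <= b - d -> a + b <= 1 ->
  G a + G b < G (a + d) + G (b - d).
Variable N : nat.
Variable x : nat -> R.
Hypothesis xs : forall a b, (a <= b)%N -> (b < N)%N -> x b <= x a.
Hypothesis x0 : forall k, (k < N)%N -> 0 <= x k.

Definition hypy (y : nat -> R) :=
  [/\ (forall k, (k < N)%N -> 0 <= y k), \sum_(k < N) y k <= 1,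
   (forall i, (i <= N)%N -> \sum_(k < i) x k <= \sum_(k < i) y k) &
   \sum_(k < N) x k = \sum_(k < N) y k].

Definition cnt (y : nat -> R) := (\sum_(k < N) (x k != y k))%N.

Lemma step y : hypy y -> (exists k, (k < N)%N /\ x k != y k) ->
  exists y', [/\ hypy y', (cnt y' < cnt y)%N &
     \sum_(k < N) G (y k) < \sum_(k < N) G (y' k)].
Proof.
case=> y0 y1 ypre ytot ex.
have exj : exists l, (l < N)%N && (x l != y l).
  by case: ex => l [lN xl]; exists l; rewrite lN xl.
case: (@ex_minnP (fun l => (l < N)%N && (x l != y l)) exj) => j /andP[jN xyj] jmin.
have eqlj : forall l, (l < j)%N -> x l = y l.
  move=> l lj; apply/eqP; apply/negPn/negP => nxy.
  have := jmin l; rewrite nxy andbT (ltn_trans lj jN) => /(_ isT); lia.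
have sumj : \sum_(l < j) x l = \sum_(l < j) y l.
  by apply: eq_bigr => l _; apply: eqlj.
have yxj : x j < y j.
  have := ypre j.+1 jN; rewrite !big_ord_recr /= sumj lerD2l => le.
  by rewrite lt_neqAle xyj le.
have exk : exists l, (j < l < N)%N && (y l < x l).
  case: (boolP [exists l : 'I_N, (j < l)%N && (y l < x l)]).
    by case/existsP=> l /andP[jl ylx]; exists l; rewrite jl ltn_ord ylx.
  move/existsPn => hk; exfalso.
  suff : \sum_(l < N) x l < \sum_(l < N) y l by rewrite ytot ltxx.
  apply: (@sum_lt1 x y N j _ jN yxj) => l lN.
  case: (ltngtP l j) => [lj|jl|->]; first by rewrite eqlj.
    by have := hk (Ordinal lN); rewrite /= jl /= -leNgt.
  by apply: ltW.
case: (@ex_minnP (fun l => (j < l < N)%N && (y l < x l)) exk) => k /andP[/andP[jk kN] ykx] kmin.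
have lejk : forall l, (j < l)%N -> (l < k)%N -> x l <= y l.
  move=> l jl lk; rewrite leNgt; apply/negP => ylx.
  have := kmin l; rewrite jl ylx (ltn_trans lk kN) /= => /(_ isT); lia.
have njk : j != k by rewrite neq_ltn jk.
pose dl := if y j - x j <= x k - y k then y j - x j else x k - y k.
have dlj : dl <= y j - x j by rewrite /dl; case: ifP => // /negbT; rewrite -ltNge => /ltW.
have dlk : dl <= x k - y k by rewrite /dl; case: ifP.
have dl0 : 0 < dl by rewrite /dl; case: ifP; rewrite subr_gt0.
have dlor : y j - dl = x j \/ y k + dl = x k.
  by rewrite /dl; case: ifP => _; [left|right]; lra.
pose y' := fun l => if l == j then y j - dl else if l == k then y k + dl else y l.
have y'j : y' j = y j - dl by rewrite /y' eqxx.
have y'k : y' k = y k + dl by rewrite /y' eq_sym (negbTE njk) eqxx.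
have y'o : forall l, l != j -> l != k -> y' l = y l.
  by move=> l /negbTE lj /negbTE lk; rewrite /y' lj lk.
have sy' : forall i, \sum_(l < i) y' l = \sum_(l < i) y l - (j < i)%:R * dl + (k < i)%:R * dl.
  move=> i; rewrite (@sum_upd2 y' y i j k njk y'o) y'j y'k; lra.
have xjk := xs j k (ltnW jk) kN.
exists y'; split.
- split.
  + move=> l lN; rewrite /y'; case: ifP => [_|_]; first by have := x0 _ jN; lra.
    case: ifP => [_|_]; last by apply: y0.
    by have := y0 _ kN; lra.
  + by rewrite sy' jN kN /=; lra.
  + move=> i iN; rewrite sy'.
    case: (ltnP k i) => ki.
      by rewrite (ltn_trans jk ki) /=; have := ypre i iN; lra.
    case: (ltnP j i) => ji; last by have := ypre i iN; rewrite /=; lra.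
    suff : \sum_(l < i) x l + dl <= \sum_(l < i) y l by rewrite /=; lra.
    elim: i ji ki {iN} => [//|i IHi] ji ki.
    rewrite !big_ord_recr /=.
    move: ji; rewrite ltnS leq_eqVlt => /orP[/eqP<-|ji].
      by rewrite sumj; lra.
    have := IHi ji (ltnW ki); have := lejk i ji ki; lra.
  + by rewrite ytot sy' jN kN /=; lra.
- have fgc : forall l, (l < N)%N -> ((x l != y' l) <= (x l != y l))%N.
    move=> l lN; have [->|lj] := eqVneq l j; first by rewrite xyj; case: (_ != _).
    have [->|lk] := eqVneq l k.
      by rewrite (negbT (gt_eqF ykx)); case: (_ != _).
    by rewrite y'o.
  rewrite /cnt; case: dlor => e.
    apply: (@sumn_lt1 (fun l => x l != y' l) (fun l => x l != y l) N j fgc jN).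
    by rewrite /= y'j e eqxx xyj.
  apply: (@sumn_lt1 (fun l => x l != y' l) (fun l => x l != y l) N k fgc kN).
  by rewrite /= y'k e eqxx (negbT (gt_eqF ykx)).
- have -> : \sum_(l < N) G (y' l) = \sum_(l < N) G (y l) + (j < N)%:R * (G (y' j) - G (y j)) + (k < N)%:R * (G (y' k) - G (y k)).
    by apply: (@sum_upd2 (fun l => G (y' l)) (fun l => G (y l)) N j k njk) => l lj lk; rewrite y'o.
  rewrite jN kN y'j y'k /= !mul1r.
  have sjk : y k + y j <= 1.
    pose g := fun l => if (l == j) || (l == k) then 0 else y l.
    have e := @sum_upd2 y g N j k njk (fun l lj lk => ltac:(by rewrite /g (negbTE lj) (negbTE lk))).
    have gj : g j = 0 by rewrite /g eqxx.
    have gk : g k = 0 by rewrite /g eqxx orbT.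
    rewrite gj gk jN kN /= !mul1r in e.
    have : 0 <= \sum_(l < N) g l by apply: sumr_ge0 => l _; rewrite /g; case: ifP => // _; apply: y0.
    lra.
  have hab : y k + dl <= y j - dl by lra.
  have := HG _ _ _ (y0 _ kN) dl0 hab sjk; lra.
Qed.

Lemma core_ind d y : (cnt y <= d)%N -> hypy y ->
  \sum_(k < N) G (y k) <= \sum_(k < N) G (x k) /\
  ((exists k, (k < N)%N /\ x k != y k) -> \sum_(k < N) G (y k) < \sum_(k < N) G (x k)).
Proof.
elim: d y => [|d IH] y cy hy.
  have eq : forall k, (k < N)%N -> x k = y k.
    move=> k kN; apply/eqP; apply/negPn/negP => nxy.
    have : (0 < cnt y)%N.
      rewrite /cnt (bigD1 (Ordinal kN)) //= nxy //.
    by rewrite lt0n; move: cy; rewrite leqn0 => ->.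
  have -> : \sum_(k < N) G (y k) = \sum_(k < N) G (x k) by apply: eq_bigr => k _; rewrite eq.
  split=> //; case=> k [kN]; by rewrite eq ?eqxx.
have [ex|nex] := boolP [exists k : 'I_N, x k != y k].
  have ex' : exists k, (k < N)%N /\ x k != y k.
    by case/existsP: ex => k xk; exists k; rewrite ltn_ord.
  have [y' [hy' cy' lt]] := step y hy ex'.
  have cy'' : (cnt y' <= d)%N by rewrite -ltnS (leq_trans cy' cy).
  have [le _] := IH y' cy'' hy'.
  have lt' := lt_le_trans lt le.
  by split => //; apply: ltW.
have eq : forall k, (k < N)%N -> x k = y k.
  move=> k kN; apply/eqP; apply/negPn/negP => nxy.
  by move/existsPn: nex => /(_ (Ordinal kN)); rewrite /= nxy.
have -> : \sum_(k < N) G (y k) = \sum_(k < N) G (x k) by apply: eq_bigr => k _; rewrite eq.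
split=> //; case=> k [kN]; by rewrite eq ?eqxx.
Qed.
End CoreS.
End Core.
Arguments hypy {R} N x y.

Section Glue.
Variable R : realType.

Lemma size_decr N (v : 'rV[R]_N) : size (decr_rearr v) = N.
Proof. by rewrite /decr_rearr size_sort size_map size_enum_ord. Qed.

Lemma sum_decr N (v : 'rV[R]_N) (F : R -> R) :
  \sum_(k < N) F (nth 0 (decr_rearr v) k) = \sum_(k < N) F (v 0 k).
Proof.
transitivity (\sum_(0 <= k < size (decr_rearr v)) F (nth 0 (decr_rearr v) k)).
  by rewrite size_decr big_mkord.
rewrite -(@big_nth _ _ _ _ 0 (decr_rearr v) xpredT F).
rewrite /decr_rearr (perm_big [seq v 0 i | i <- enum 'I_N]); last by rewrite perm_sort perm_refl.
by rewrite big_map big_enum.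
Qed.

Lemma sum_mxvec m n (P : 'M[R]_(m, n)) (F : R -> R) :
  \sum_(k < m * n) F (mxvec P 0 k) = \sum_(i < m) \sum_(j < n) F (P i j).
Proof.
rewrite (reindex _ (curry_mxvec_bij m n)) /=.
rewrite pair_big /=; apply: eq_bigr => -[i j] _ /=; by rewrite mxvecE.
Qed.

Lemma decr_sorted N (v : 'rV[R]_N) a b : (a <= b)%N -> (b < N)%N ->
  nth 0 (decr_rearr v) b <= nth 0 (decr_rearr v) a.
Proof.
move=> ab bN.
have srt : sorted (fun a b : R => b <= a) (decr_rearr v).
  by apply: sort_sorted => u w; exact: le_total.
have tr : transitive (fun a b : R => b <= a) by move=> u w z /= h1 h2; exact: le_trans h2 h1.
have rf : reflexive (fun a b : R => b <= a) by move=> u /=.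
apply: (sorted_leq_nth tr rf 0 srt) => //; rewrite inE size_decr //.
exact: leq_ltn_trans bN.
Qed.

Lemma decr_ge0 N (v : 'rV[R]_N) k : (forall i, 0 <= v 0 i) -> (k < N)%N ->
  0 <= nth 0 (decr_rearr v) k.
Proof.
move=> v0 kN.
have : nth 0 (decr_rearr v) k \in decr_rearr v by apply: mem_nth; rewrite size_decr.
rewrite /decr_rearr mem_sort => /mapP [i _ ->]; exact: v0.
Qed.
End Glue.
Arguments size_decr {R N} v.
Arguments sum_decr {R N} v F.
Arguments sum_mxvec {R m n} P F.
Arguments decr_sorted {R N} v [a b].
Arguments decr_ge0 {R N} v [k].

Lemma pairlt (R : realType) (Phi h : R -> R) :
  (forall c : R, 0 <= c <= 1 ->
     strictly_monotone_on `[0, c / 2] (fun x => h x + h (c - x)) /\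
     strictly_increasing_on `[0, c / 2] (fun x => Phi (h x + h (c - x)))) ->
  forall a b d, 0 <= a -> 0 < d -> a + d <= b - d -> a + b <= 1 ->
    Phi (h a + h b) < Phi (h (a + d) + h (b - d)).
Proof.
move=> hc a b d a0 d0 ad ab1.
have inI : forall c u, 0 <= u -> u <= c / 2 -> (`[0, c / 2]%classic : set R) u.
  by move=> c u u0 uc; rewrite /= in_itv /= u0 uc.
have c01 : 0 <= a + b <= 1 by apply/andP; split; lra.
have [_ hinc] := hc (a + b) c01.
have i1 : a <= (a + b) / 2 by lra.
have i2 : a + d <= (a + b) / 2 by lra.
have i3 : 0 <= a + d by lra.
have i4 : a < a + d by lra.
have := hinc a (a + d) (inI _ _ a0 i1) (inI _ _ i3 i2) i4.
have e1 : a + b - a = b by ring.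
have e2 : a + b - (a + d) = b - d by ring.
by rewrite e1 e2.
Qed.

Theorem proposition4p1 (R : realType) (Phi h : R -> R) (m n : nat)
    (p : 'I_m -> R) (q : 'I_n -> R) :
  (forall x : R, derivable Phi x 1) ->
  strictly_monotone_on setT Phi ->
  differentiable_on `[0, 1] h ->
  (forall c : R, 0 <= c <= 1 ->
     strictly_monotone_on `[0, c / 2] (fun x => h x + h (c - x)) /\
     strictly_increasing_on `[0, c / 2] (fun x => Phi (h x + h (c - x)))) ->
  (2 <= m)%N -> (2 <= n)%N ->
  pos_prob_vec p -> pos_prob_vec q ->
  strict_schur_concave_on (coupling p q) (phi_h_entropy Phi h).
Proof.
move=> _ Phim _ hc _ _ [pp psum] [qq qsum] P Q [P0 [Prow Pcol]] [Q0 [Qrow Qcol]].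
pose x := fun k => nth 0 (decr_rearr (mxvec P)) k.
pose y := fun k => nth 0 (decr_rearr (mxvec Q)) k.
have key : forall G : R -> R,
  (forall a b d, 0 <= a -> 0 < d -> a + d <= b - d -> a + b <= 1 ->
     G a + G b < G (a + d) + G (b - d)) ->
  majorized (mxvec P) (mxvec Q) ->
  \sum_(i < m) \sum_(j < n) G (Q i j) <= \sum_(i < m) \sum_(j < n) G (P i j) /\
  (strictly_majorized (mxvec P) (mxvec Q) ->
   \sum_(i < m) \sum_(j < n) G (Q i j) < \sum_(i < m) \sum_(j < n) G (P i j)).
  move=> G HG [pre tot].
  rewrite -!sum_mxvec -(sum_decr (mxvec P)) -(sum_decr (mxvec Q)).
  have xs : forall a b, (a <= b)%N -> (b < m * n)%N -> x b <= x a.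
    by move=> a b ab bN; apply: decr_sorted.
  have x0 : forall k, (k < m * n)%N -> 0 <= x k.
    by move=> k kN; apply: decr_ge0 => // i; case/mxvec_indexP: i => i j; rewrite mxvecE.
  have hy : hypy (m * n) x y.
    split.
    - by move=> k kN; apply: decr_ge0 => // i; case/mxvec_indexP: i => i j; rewrite mxvecE.
    - have := sum_decr (mxvec Q) (fun a => a); rewrite /= => ->.
      have := sum_mxvec Q (fun a => a); rewrite /= => ->.
      rewrite (eq_bigr (fun i => p i)) ?psum // => i _; exact: Qrow.
    - move=> i iN; case: (posnP i) => [->|i0]; first by rewrite !big_ord0.
      move: iN; rewrite leq_eqVlt => /orP[/eqP->|iN]; first by move: tot; rewrite /Fpart => ->.
      by apply: pre; rewrite i0 iN.
    - exact: tot.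
  have [le lt] := @core_ind R G HG (m * n) x xs x0 _ y (leqnn _) hy.
  split => // -[_ [i [/andP[i1 iN] ltF]]]; apply: lt.
  case: (boolP [exists k : 'I_(m * n), x k != y k]) => [/existsP[k xk]|/existsPn nex].
    by exists k; rewrite ltn_ord.
  exfalso; move: ltF; rewrite /Fpart.
  have -> : \sum_(k < i) nth 0 (decr_rearr (mxvec P)) k = \sum_(k < i) nth 0 (decr_rearr (mxvec Q)) k.
    apply: eq_bigr => k _; have kN : (k < m * n)%N by exact: ltn_trans (ltn_ord k) iN.
    by have := nex (Ordinal kN); rewrite negbK => /eqP.
  by rewrite ltxx.
have pairlt := @pairlt R Phi h hc.
rewrite /phi_h_entropy {x y}.
case: Phim => [inc|dec].
  have HG : forall a b d, 0 <= a -> 0 < d -> a + d <= b - d -> a + b <= 1 ->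
     h a + h b < h (a + d) + h (b - d).
    move=> a b d a0 d0 ad ab1; have := pairlt a b d a0 d0 ad ab1.
    set u := h a + h b; set v := h (a + d) + h (b - d).
    case: (ltgtP u v) => // [vu|->]; last by rewrite ltxx.
    by have := inc v u I I vu => /lt_trans H /H; rewrite ltxx.
  split => [maj|smaj].
    have [le _] := key h HG maj.
    move: le; rewrite le_eqVlt => /orP[/eqP->//|lt]; apply: ltW; exact: inc.
  have [_ lt] := key h HG (proj1 smaj).
  by apply: inc => //; apply: lt.
have HG : forall a b d, 0 <= a -> 0 < d -> a + d <= b - d -> a + b <= 1 ->
   - h a + - h b < - h (a + d) + - h (b - d).
  move=> a b d a0 d0 ad ab1; have := pairlt a b d a0 d0 ad ab1.
  set u := h a + h b; set v := h (a + d) + h (b - d).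
  case: (ltgtP u v) => [uv|vu|->]; last by rewrite ltxx.
  - by have := dec u v I I uv => /lt_trans H /H; rewrite ltxx.
  - by move=> _; rewrite /u /v in vu; lra.
have e : forall M : 'M[R]_(m, n), \sum_(i < m) \sum_(j < n) - h (M i j) = - \sum_(i < m) \sum_(j < n) h (M i j).
  by move=> M; rewrite -sumrN; apply: eq_bigr => i _; rewrite sumrN.
split => [maj|smaj].
  have [le _] := key (fun a => - h a) HG maj.
  move: le; rewrite !e lerN2 le_eqVlt => /orP[/eqP->//|lt]; apply: ltW; exact: dec.
have [_ lt] := key (fun a => - h a) HG (proj1 smaj).
by move: (lt smaj); rewrite !e ltrN2; apply: dec.
Qed.
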